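(* If a set $C\subseteq\mathbb{R}^n$ is smoothly approximately convex at $\bar x\in C$, then it is uniformly approximable by geodesics (UAG) at $\bar x$. If moreover $C$ is locally closed at $\bar x$, then $C$ is super-regular and Clarke regular at $\bar x$.
   Context: $C$ is smoothly approximately convex at $\bar x$ if for every $\epsilon>0$ there is a neighborhood $W$ of $\bar x$ such that for all $x,x'\in C\cap W$ there is a map $\gamma:[0,1]\to C$, extending to a $\mathcal{C}^{(1)}$ map on an open neighborhood of $[0,1]$, with $\gamma(0)=x,\gamma(1)=x'$ and $\|\gamma'(t)-(x'-x)\|\le\epsilon\|x'-x\|$ for all $t$. $C$ is UAG at $\bar x$ if for every $\epsilon>0$ there is a neighborhood $W$ of $\bar x$ such that for all distinct $x,x'\in C\cap W$ there exist $\gamma:[0,1]\to C$ and $d\in\mathbb{R}^n\setminus\{0\}$ with $\gamma(0)=x$, $\gamma(1)=x'$ and $\|\gamma(t)-(x+td)\|\le\epsilon t\|d\|$ for all $t\in[0,1]$. $C$ is locally closed at $\bar x$ if $C\cap\overline B$ is closed for some closed ball $\overline B$ centered at $\bar x$. Regular normal cone: $\widehat N_C(\bar x)=\{v:\langle v,x-\bar x\rangle\le o(\|x-\bar x\|),\ x\in C\}$; normal cone $N_C(\bar x)$: all limits of $v_k\in\widehat N_C(x_k)$ with $x_k\in C$, $x_k\to\bar x$. $C$ is Clarke regular at $\bar x$ if it is locally closed there and $N_C(\bar x)=\widehat N_C(\bar x)$. $C$ is super-regular at $\bar x$ if it is locally closed there and for every $\epsilon>0$ there is a neighborhood $W$ of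 $\bar x$ with $\langle v,x'-x\rangle\le\epsilon\|v\|\|x'-x\|$ for all $x,x'\in C\cap W$ and $v\in N_C(x)$. *)

(* Defs.v *)
From HB Require Import structures.
From mathcomp Require Import all_boot all_order all_algebra.
From mathcomp Require Import all_classical all_reals all_analysis.
Set Implicit Arguments. Unset Strict Implicit. Unset Printing Implicit Defensive.
Import Order.TTheory GRing.Theory Num.Theory.
Import numFieldNormedType.Exports.
Local Open Scope classical_set_scope.
Local Open Scope ring_scope.

Section Defs.
Variables (R : realType) (n : nat).
Local Notation V := 'rV[R]_n.

Definition dotv (u v : V) : R := \sum_(i < n) u ord0 i * v ord0 i.
Definition enorm (u : V) : R := Num.sqrt (dotv u u).

Definition smoothly_approx_convex (C : set V) (xbar : V) : Prop :=
  forall eps : R, 0 < eps -> exists W : set V, nbhs xbar W /\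
    forall x x' : V, C x -> W x -> C x' -> W x' ->
    exists (gamma : R -> V) (U : set R),
      [/\ open U, `[0, 1]%classic `<=` U,
          (forall t, U t -> derivable gamma t 1),
          (forall t, U t -> {for t, continuous (fun s => 'D_1 gamma s)}) &
        [/\ (forall t, `[0, 1]%classic t -> C (gamma t)),
          gamma 0 = x, gamma 1 = x' &
          forall t, `[0, 1]%classic t ->
            enorm ('D_1 gamma t - (x' - x)) <= eps * enorm (x' - x)]].

Definition UAG (C : set V) (xbar : V) : Prop :=
  forall eps : R, 0 < eps -> exists W : set V, nbhs xbar W /\
    forall x x' : V, C x -> W x -> C x' -> W x' -> x != x' ->
    exists (gamma : R -> V) (d : V),
      [/\ d != 0,
          (forall t, `[0, 1]%classic t -> C (gamma t)),
          gamma 0 = x, gamma 1 = x' &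
          forall t, `[0, 1]%classic t ->
            enorm (gamma t - (x + t *: d)) <= eps * t * enorm d].

Definition locally_closed (C : set V) (xbar : V) : Prop :=
  exists r : R, 0 < r /\ closed (C `&` [set y | enorm (y - xbar) <= r]).

Definition regular_normal (C : set V) (xbar v : V) : Prop :=
  forall eps : R, 0 < eps -> exists delta : R, 0 < delta /\
    forall x, C x -> enorm (x - xbar) < delta ->
      dotv v (x - xbar) <= eps * enorm (x - xbar).

Definition limiting_normal (C : set V) (xbar v : V) : Prop :=
  exists (xs vs : nat -> V),
    [/\ (forall k, C (xs k)), (forall k, regular_normal C (xs k) (vs k)),
        xs @ \oo --> xbar & vs @ \oo --> v].

Definition clarke_regular (C : set V) (xbar : V) : Prop :=
  locally_closed C xbar /\
  (forall v, limiting_normal C xbar v <-> regular_normal C xbar v).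

Definition super_regular (C : set V) (xbar : V) : Prop :=
  locally_closed C xbar /\
  forall eps : R, 0 < eps -> exists W : set V, nbhs xbar W /\
    forall x x' v : V, C x -> W x -> C x' -> W x' -> limiting_normal C x v ->
      dotv v (x' - x) <= eps * enorm v * enorm (x' - x).

End Defs.

(* Main.v *)
Require Import Defs.
From HB Require Import structures.
From mathcomp Require Import all_boot all_order all_algebra.
From mathcomp Require Import all_classical all_reals all_analysis.
From mathcomp Require Import ring lra.
Set Implicit Arguments. Unset Strict Implicit. Unset Printing Implicit Defensive.
Import Order.TTheory GRing.Theory Num.Theory.
Import numFieldNormedType.Exports.
Local Open Scope classical_set_scope.
Local Open Scope ring_scope.


Section Alg.
Variables (R : realType) (n : nat).
Local Notation V := 'rV[R]_n.
Implicit Types u v w : V.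

Lemma dotvC u v : dotv u v = dotv v u.
Proof. by apply: eq_bigr => i _; rewrite mulrC. Qed.

Lemma dotvDr u v w : dotv u (v + w) = dotv u v + dotv u w.
Proof. by rewrite /dotv -big_split; apply: eq_bigr => i _; rewrite !mxE mulrDr. Qed.

Lemma dotvNr u v : dotv u (- v) = - dotv u v.
Proof. by rewrite /dotv -sumrN; apply: eq_bigr => i _; rewrite !mxE mulrN. Qed.

Lemma dotvBr u v w : dotv u (v - w) = dotv u v - dotv u w.
Proof. by rewrite dotvDr dotvNr. Qed.

Lemma dotvZr u k v : dotv u (k *: v) = k * dotv u v.
Proof. by rewrite /dotv mulr_sumr; apply: eq_bigr => i _; rewrite !mxE mulrCA. Qed.

Lemma dotvDl u v w : dotv (v + w) u = dotv v u + dotv w u.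
Proof. by rewrite dotvC dotvDr -!(dotvC u). Qed.

Lemma dotvNl u v : dotv (- v) u = - dotv v u.
Proof. by rewrite dotvC dotvNr dotvC. Qed.

Lemma dotvBl u v w : dotv (v - w) u = dotv v u - dotv w u.
Proof. by rewrite dotvDl dotvNl. Qed.

Lemma dotvZl u k v : dotv (k *: v) u = k * dotv v u.
Proof. by rewrite dotvC dotvZr dotvC. Qed.

Lemma dotv0r u : dotv u 0 = 0.
Proof. by rewrite /dotv big1 // => i _; rewrite mxE mulr0. Qed.

Lemma dotvv_ge0 u : 0 <= dotv u u.
Proof. by apply: sumr_ge0 => i _; rewrite -expr2 sqr_ge0. Qed.

Lemma dotvv_eq0 u : dotv u u = 0 -> u = 0.
Proof.
move=> h; apply/rowP => i; rewrite mxE.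
have := @psumr_eq0P _ _ xpredT (fun j => u ord0 j * u ord0 j).
have hp : forall j, xpredT j -> 0 <= u ord0 j * u ord0 j.
  by move=> j _; rewrite -expr2 sqr_ge0.
move=> /(_ hp h i isT).
by move/eqP; rewrite mulf_eq0 orbb => /eqP.
Qed.

Lemma enorm_ge0 u : 0 <= enorm u.
Proof. exact: sqrtr_ge0. Qed.

Lemma enorm_sq u : enorm u ^+ 2 = dotv u u.
Proof. by rewrite sqr_sqrtr // dotvv_ge0. Qed.

Lemma enormN u : enorm (- u) = enorm u.
Proof. by rewrite /enorm dotvNl dotvNr opprK. Qed.

Lemma enormZ k u : enorm (k *: u) = `|k| * enorm u.
Proof.
by rewrite /enorm dotvZl dotvZr mulrA -expr2 sqrtrM ?sqr_ge0 // sqrtr_sqr.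
Qed.

Lemma enorm0 : enorm (0 : V) = 0.
Proof. by rewrite /enorm dotv0r sqrtr0. Qed.

Lemma enorm_eq0 u : enorm u = 0 -> u = 0.
Proof. by move=> h; apply: dotvv_eq0; rewrite -enorm_sq h expr0n. Qed.

Lemma dotv_quad u v s t :
  dotv (s *: u - t *: v) (s *: u - t *: v) =
  s ^+ 2 * dotv u u - 2 * s * t * dotv u v + t ^+ 2 * dotv v v.
Proof.
rewrite !dotvBl !dotvBr !dotvZl !dotvZr (dotvC v u).
ring.
Qed.

Lemma cauchy_schwarz u v : dotv u v <= enorm u * enorm v.
Proof.
have [a0|a0] := eqVneq (enorm u) 0.
  by rewrite a0 mul0r (enorm_eq0 a0) dotvC dotv0r.
have [b0|b0] := eqVneq (enorm v) 0.
  by rewrite b0 mulr0 (enorm_eq0 b0) dotv0r.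
have := dotvv_ge0 (enorm v *: u - enorm u *: v).
rewrite dotv_quad -!enorm_sq.
have ha : 0 < enorm u by rewrite lt_def a0 enorm_ge0.
have hb : 0 < enorm v by rewrite lt_def b0 enorm_ge0.
set a := enorm u; set b := enorm v; set c := dotv u v => h.
have hab : 0 < a * b by rewrite mulr_gt0.
have : 0 <= (a * b) * (a * b - c) by nra.
by rewrite pmulr_rge0 // subr_ge0.
Qed.

Lemma cauchy_schwarz_abs u v : `|dotv u v| <= enorm u * enorm v.
Proof.
rewrite ler_norml cauchy_schwarz andbT lerNl -dotvNl.
by rewrite -(enormN u) cauchy_schwarz.
Qed.

Lemma enormD u v : enorm (u + v) <= enorm u + enorm v.
Proof.
have h : enorm (u + v) ^+ 2 <= (enorm u + enorm v) ^+ 2.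
  rewrite enorm_sq dotvDl !dotvDr (dotvC v u) sqrrD -!enorm_sq.
  have := cauchy_schwarz u v; lra.
have := enorm_ge0 (u + v); have := enorm_ge0 u; have := enorm_ge0 v.
move: h; nra.
Qed.

Lemma enormB u v : enorm (u - v) <= enorm u + enorm v.
Proof. by rewrite -(enormN v) enormD. Qed.

Lemma coord_le_enorm u i : `|u ord0 i| <= enorm u.
Proof.
rewrite -sqrtr_sqr ler_wsqrtr // /dotv (bigD1 i) //= -expr2 lerDl.
by apply: sumr_ge0 => j _; rewrite -expr2 sqr_ge0.
Qed.

Lemma mxnorm_le_enorm u : `|u| <= enorm u.
Proof.
rewrite /Num.Def.normr /= mx_normrE.
apply: bigmax_le; first exact: enorm_ge0.
by move=> [i j] _ /=; rewrite (ord1 i); exact: coord_le_enorm.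
Qed.

End Alg.

Section Ana.
Variables (R : realType) (n : nat).
Local Notation V := 'rV[R]_n.

Lemma dotv_cvg (T : Type) (F : set_system T) (FF : Filter F) (f g : T -> V) a b :
  f @ F --> a -> g @ F --> b -> (fun k => dotv (f k) (g k)) @ F --> dotv a b.
Proof.
move=> fa gb; rewrite /dotv.
apply: (@cvg_big R 'I_n +%R 0 xpredT add_continuous T F (index_enum 'I_n)
  (fun i k => f k ord0 i * g k ord0 i) (fun i => a ord0 i * b ord0 i) FF).
move=> i _; apply: cvgM.
- exact: (continuous_cvg _ (@coord_continuous R 1 n ord0 i a) fa).
- exact: (continuous_cvg _ (@coord_continuous R 1 n ord0 i b) gb).
Qed.

Lemma enorm_cvg (T : Type) (F : set_system T) (FF : Filter F) (f : T -> V) a :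
  f @ F --> a -> (fun k => enorm (f k)) @ F --> enorm a.
Proof.
move=> fa; rewrite /enorm.
exact: (continuous_cvg _ (@sqrt_continuous R _) (dotv_cvg FF fa fa)).
Qed.

Lemma is_derive_dotv (gamma : R -> V) (w : V) (s : R) :
  derivable gamma s 1 ->
  is_derive s 1 (fun t => dotv w (gamma t)) (dotv w ('D_1 gamma s)).
Proof.
move=> dg.
have dgi : forall i, derivable (fun t => gamma t ord0 i) s 1.
  by move=> i; move/derivable_mxP: dg; apply.
have -> : (fun t => dotv w (gamma t)) =
    \sum_(i < n) (fun t => w ord0 i * gamma t ord0 i).
  by apply/funext => t; rewrite fct_sumE.
have -> : dotv w ('D_1 gamma s) =
    \sum_(i < n) (w ord0 i *: 'D_1 (fun t => gamma t ord0 i) s).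
  by rewrite /dotv (derive_mx dg); apply: eq_bigr => i _; rewrite mxE.
apply: is_derive_sum => i.
exact: (is_deriveZ (w ord0 i) (derivableP (dgi i))).
Qed.

End Ana.

Section MV.
Variables (R : realType) (n : nat).
Local Notation V := 'rV[R]_n.

Lemma sac_bound (gamma : R -> V) (U : set R) (x d : V) (eps : R) :
  0 < eps -> `[0, 1]%classic `<=` U ->
  (forall t, U t -> derivable gamma t 1) -> gamma 0 = x ->
  (forall t, `[0, 1]%classic t -> enorm ('D_1 gamma t - d) <= eps * enorm d) ->
  forall t, `[0, 1]%classic t -> enorm (gamma t - (x + t *: d)) <= eps * t * enorm d.
Proof.
move=> e0 sU dg g0 hD t t01.
have /= := t01; rewrite in_itv /= => /andP[t0 t1].
have [->|tpos] := eqVneq t 0.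
  by rewrite scale0r addr0 g0 subrr enorm0 mulr0 mul0r.
have tgt0 : 0 < t by rewrite lt_def tpos t0.
set w := gamma t - (x + t *: d).
pose c := dotv w d.
pose phi := fun s => dotv w (gamma s) - s * c.
pose df := fun s => dotv w ('D_1 gamma s) - c.
have sub01 : forall s, s \in `[0, t] -> U s.
  move=> s; rewrite in_itv /= => /andP[s0 st]; apply: sU => /=.
  by rewrite in_itv /= s0 (le_trans st t1).
have hder : forall s, U s -> is_derive s 1 phi (df s).
  move=> s Us.
  have -> : phi = (fun s => dotv w (gamma s)) - (c \*: id).
    by apply/funext => r; rewrite /phi /= mulrC.
  rewrite /df.
  apply: is_deriveB; first exact: is_derive_dotv (dg _ Us).
  have h := @is_deriveZ R _ _ id c s 1 1 (is_derive_id _ _).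
  have h2 : is_derive s 1 (c \*: id) c.
    by move: h; rewrite [X in is_derive _ _ _ X](_ : _ = c) //; exact: mulr1.
  exact: h2.
have [r r0t eqr] : exists2 r, r \in `]0, t[ & phi t - phi 0 = df r * (t - 0).
  apply: MVT => //.
  - move=> s; rewrite in_itv /= => /andP[s0 st]; apply: hder; apply: sub01.
    by rewrite in_itv /= !ltW.
  - apply: continuous_in_subspaceT => s /[!inE] /sub01 Us.
    apply: differentiable_continuous; apply/derivable1_diffP.
    by case: (hder s Us).
have r01 : `[0, 1]%classic r.
  move: r0t; rewrite /= !in_itv /= => /andP[r0 rt].
  by rewrite (ltW r0) (le_trans (ltW rt) t1).
have lhs : phi t - phi 0 = enorm w ^+ 2.
  rewrite enorm_sq /phi g0 mul0r subr0 /w dotvBr dotvDr dotvZr /c; ring.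
have rhs : df r <= enorm w * (eps * enorm d).
  rewrite /df /c -dotvBr; apply: le_trans (cauchy_schwarz _ _) _.
  by apply: ler_wpM2l; [exact: enorm_ge0| exact: hD].
move: eqr; rewrite lhs subr0 => eqr.
have h : enorm w ^+ 2 <= enorm w * (eps * enorm d * t).
  rewrite eqr.
  have : df r * t <= (enorm w * (eps * enorm d)) * t.
    by apply: ler_wpM2r => //; exact: ltW.
  by rewrite -!mulrA.
have hK : 0 <= eps * enorm d * t by rewrite !mulr_ge0 ?enorm_ge0 // ltW.
rewrite mulrAC.
move: h hK (enorm_ge0 w); set a := enorm w; set K := eps * enorm d * t.
nra.
Qed.

End MV.

Section Reg.
Variables (R : realType) (n : nat).
Local Notation V := 'rV[R]_n.

Lemma reg_bound (C : set V) (x x' v : V) (gamma : R -> V) (eps : R) :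
  0 < eps -> regular_normal C x v ->
  (forall t, `[0, 1]%classic t -> C (gamma t)) ->
  (forall t, `[0, 1]%classic t ->
     enorm (gamma t - (x + t *: (x' - x))) <= eps * t * enorm (x' - x)) ->
  dotv v (x' - x) <= eps * enorm v * enorm (x' - x).
Proof.
move=> e0 hreg hC hb.
set d := x' - x.
apply/ler_addgt0Pr => e epos.
have hd := enorm_ge0 d.
pose K := (1 + eps) * enorm d + 1.
have K0 : 0 < K by rewrite /K; nra.
have [delta [dpos hdel]] := hreg (e / K) (divr_gt0 epos K0).
pose t := delta / (delta + K).
have dK0 : 0 < delta + K by lra.
have t0 : 0 < t by rewrite divr_gt0.
have t1 : t <= 1 by rewrite ler_pdivrMr // mul1r; lra.
have tK : t * K < delta.
  rewrite /t mulrAC ltr_pdivrMr //; nra.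
have t01 : `[0, 1]%classic t by rewrite /= in_itv /= (ltW t0) t1.
set g := gamma t - x.
set r := gamma t - (x + t *: d).
have hr := hb t t01; rewrite -/d -/r in hr.
have hg : enorm g <= t * K.
  have -> : g = r + t *: d by rewrite /g /r opprD addrA subrK.
  apply: le_trans (enormD _ _) _.
  rewrite enormZ ger0_norm ?ltW //.
  rewrite /K; nra.
have h1 : dotv v g <= e / K * enorm g.
  by apply: hdel; [exact: hC | exact: le_lt_trans hg tK].
have h2 : - dotv v r <= enorm v * (eps * t * enorm d).
  rewrite -dotvNr; apply: le_trans (cauchy_schwarz _ _) _.
  by rewrite enormN; apply: ler_wpM2l => //; exact: enorm_ge0.
have h3 : dotv v (t *: d) = dotv v g - dotv v r.
  by rewrite -dotvBr /g /r opprD opprK addrACA subrr add0r addKr.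
rewrite dotvZr in h3.
have h4 : e / K * enorm g <= e * t.
  have E : e / K * (t * K) = e * t by rewrite mulrCA divfK ?gt_eqF // mulrC.
  rewrite -E; apply: ler_wpM2l => //; exact: divr_ge0 (ltW epos) (ltW K0).
have hv := enorm_ge0 v.
have : t * dotv v d <= t * (eps * enorm v * enorm d + e).
  rewrite h3.
  have -> : t * (eps * enorm v * enorm d + e) = e * t + enorm v * (eps * t * enorm d) by ring.
  by apply: lerD; [exact: le_trans h1 h4 | exact: h2].
by rewrite ler_pM2l.
Qed.
End Reg.

Section Main.
Variables (R : realType) (n : nat) (C : set 'rV[R]_n) (xbar : 'rV[R]_n).
Local Notation V := 'rV[R]_n.

Lemma key_geo : smoothly_approx_convex C xbar ->
  forall eps : R, 0 < eps -> exists W : set V, nbhs xbar W /\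
    forall x x' : V, C x -> W x -> C x' -> W x' ->
    exists gamma : R -> V,
      [/\ (forall t, `[0, 1]%classic t -> C (gamma t)), gamma 0 = x, gamma 1 = x' &
       forall t, `[0, 1]%classic t ->
         enorm (gamma t - (x + t *: (x' - x))) <= eps * t * enorm (x' - x)].
Proof.
move=> sac eps e0; have [W [nW hW]] := sac eps e0.
exists W; split => // x x' Cx Wx Cx' Wx'.
have [gamma [U [oU sU dg _ [hC g0 g1 hD]]]] := hW x x' Cx Wx Cx' Wx'.
exists gamma; split => //.
exact: (sac_bound e0 sU dg g0 hD).
Qed.

Lemma reg_ineq : smoothly_approx_convex C xbar ->
  forall eps : R, 0 < eps -> exists W : set V, nbhs xbar W /\
    forall x x' v : V, C x -> W x -> C x' -> W x' -> regular_normal C x v ->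
      dotv v (x' - x) <= eps * enorm v * enorm (x' - x).
Proof.
move=> sac eps e0; have [W [nW hW]] := key_geo sac e0.
exists W; split => // x x' v Cx Wx Cx' Wx' rv.
have [gamma [hC g0 g1 hb]] := hW x x' Cx Wx Cx' Wx'.
exact: (reg_bound e0 rv hC hb).
Qed.

Lemma lim_ineq : smoothly_approx_convex C xbar ->
  forall eps : R, 0 < eps -> exists W : set V, nbhs xbar W /\
    forall x x' v : V, C x -> W x -> C x' -> W x' -> limiting_normal C x v ->
      dotv v (x' - x) <= eps * enorm v * enorm (x' - x).
Proof.
move=> sac eps e0; have [W0 [nW0 hW0]] := reg_ineq sac e0.
have [r r0 brW] := (nbhs_ballP _ _).1 nW0.
exists (ball xbar r); split; first exact: nbhsx_ballx.
move=> x x' v Cx Wx Cx' Wx' [xs [vs [Cxs rvs xsx vsv]]].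
have nbW : nbhs x (ball xbar r) by exact: (ball_open xbar r) x Wx.
have ev : \forall k \near \oo, ball xbar r (xs k) := xsx _ nbW.
have c1 : (fun k => dotv (vs k) (x' - xs k)) @ \oo --> dotv v (x' - x).
  apply: dotv_cvg => //; apply: cvgB => //; exact: cvg_cst.
have c2 : (fun k => eps * enorm (vs k) * enorm (x' - xs k)) @ \oo -->
    eps * enorm v * enorm (x' - x).
  apply: cvgM; first apply: cvgM; first exact: cvg_cst.
  + exact: enorm_cvg.
  + apply: enorm_cvg; apply: cvgB => //; exact: cvg_cst.
apply: (ler_cvg_to c1 c2).
near=> k; apply: hW0 => //; first by apply: brW; near: k.
exact: brW.
Unshelve. all: by end_near.
Qed.

End Main.

Unset Implicit Arguments.
Theorem proposition3p6 (R : realType) (n : nat) (C : set 'rV[R]_n) (xbar : 'rV[R]_n) :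
  C xbar -> smoothly_approx_convex C xbar ->
  UAG C xbar /\
  (locally_closed C xbar -> super_regular C xbar /\ clarke_regular C xbar).
Proof.
move=> Cxbar sac; split.
  move=> eps e0; have [W [nW hW]] := key_geo sac e0.
  exists W; split => // x x' Cx Wx Cx' Wx' xx'.
  have [gamma [hC g0 g1 hb]] := hW x x' Cx Wx Cx' Wx'.
  exists gamma, (x' - x); split => //.
  by rewrite subr_eq0 eq_sym.
move=> lc; split.
  split => //; exact: lim_ineq sac.
split => // v; split.
- move=> lv eps e0.
  pose e' := eps / (enorm v + 1).
  have hv := enorm_ge0 v.
  have e'0 : 0 < e' by rewrite divr_gt0 // ltr_wpDl.
  have [W [nW hW]] := lim_ineq sac e'0.
  have [r r0 brW] := (nbhs_ballP _ _).1 nW.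
  exists r; split => // x Cx hx.
  have Wx : W x.
    apply: brW; rewrite -ball_normE /= distrC.
    exact: le_lt_trans (mxnorm_le_enorm _) hx.
  apply: le_trans (hW xbar x v Cxbar (nbhs_singleton nW) Cx Wx lv) _.
  apply: ler_wpM2r; first exact: enorm_ge0.
  rewrite /e' mulrAC ler_pdivrMr ?ltr_wpDl // ler_pM2l // lerDl //.
- move=> rv; exists (fun _ => xbar), (fun _ => v); split => //; exact: cvg_cst.
Qed.
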